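(* Let $Q_k^A,Q_k^B$ be the SDQ iterates and $w_k^A,w_k^B$ the associated noise vectors (see context). Define the upper comparison system \[ Q_{k+1}^{A_U}-Q^*=(I+\alpha\gamma DP\Pi_{Q_k^B}-\alpha D)(Q_k^{A_U}-Q^* )+\alpha w_k^A,\qquad Q_{k+1}^{B_U}-Q^*=(I+\alpha\gamma DP\Pi_{Q_k^A}-\alpha D)(Q_k^{B_U}-Q^* )+\alpha w_k^B, \] with arbitrary initial vectors $Q_0^{A_U},Q_0^{B_U}\in\mathbb{R}^{|\mathcal{S}||\mathcal{A}|}$. Suppose $Q_0^{A_U}-Q^*\ge Q_0^A-Q^*$ and $Q_0^{B_U}-Q^*\ge Q_0^B-Q^*$ element-wise. Then for all $k\ge 0$, $Q_k^{A_U}-Q^*\ge Q_k^A-Q^*$ and $Q_k^{B_U}-Q^*\ge Q_k^B-Q^*$ element-wise.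
   Context: Finite MDP with states $\mathcal{S}=\{1,\dots,|\mathcal{S}|\}$, actions $\mathcal{A}=\{1,\dots,|\mathcal{A}|\}$, transitions $P(s'|s,a)$, bounded deterministic reward $r(s,a,s')$, discount $\gamma\in(0,1)$, optimal action-value function $Q^*$. Sampling distribution $d(s,a)>0$ on $\mathcal{S}\times\mathcal{A}$; at iteration $k$, $(s_k,a_k)\sim d$ i.i.d., $s_k'\sim P(\cdot|s_k,a_k)$, $r_{k+1}=r(s_k,a_k,s_k')$. Constant step-size $\alpha\in(0,1)$. SDQ: only entry $(s_k,a_k)$ is updated, $Q_{k+1}^A(s_k,a_k)=Q_k^A(s_k,a_k)+\alpha\{r_{k+1}+\gamma Q_k^A(s_k',\arg\max_aQ_k^B(s_k',a))-Q_k^A(s_k,a_k)\}$ and symmetrically for $B$ with roles of $A,B$ swapped. Vector notation: $Q\in\mathbb{R}^{|\mathcal{S}||\mathcal{A}|}$ stacks $Q(\cdot,1),\dots,Q(\cdot,|\mathcal{A}|)$, so $Q(s,a)=(e_a\otimes e_s)^TQ$. $D$ is the diagonal matrix with entry $d(s,a)$ at position $(s,a)$. $P\in\mathbb{R}^{|\mathcal{S}||\mathcal{A}|\times|\mathcal{S}|}$ has row $(s,a)$ equal to $P(\cdot|s,a)$. $R\in\mathbb{R}^{|\mathcal{S}||\mathcal{A}|}$, $R(s,a)=\mathbb{E}[r(s,a,s')|s,a]$. For $Q$, $\pi_Q(s)=\arg\max_aQ(s,a)$ (fixed tie-breaking) and $\Pi_Q\in\mathbb{R}^{|\mathcal{S}|\times|\mathcal{S}||\mathcal{A}|}$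 has $s$-th row $e_{\pi_Q(s)}^T\otimes e_s^T$, so $(\Pi_QQ')(s)=Q'(s,\pi_Q(s))$. Noise: $w_k^A=(e_{a_k}\otimes e_{s_k})r_{k+1}+\gamma(e_{a_k}\otimes e_{s_k})e_{s_k'}^T\Pi_{Q_k^B}Q_k^A-(e_{a_k}\otimes e_{s_k})(e_{a_k}\otimes e_{s_k})^TQ_k^A-(DR+\gamma DP\Pi_{Q_k^B}Q_k^A-DQ_k^A)$, and $w_k^B$ is the same with $A$ and $B$ swapped. Element-wise inequalities between vectors are denoted $\ge$. *)

(* Defs.v *)
From HB Require Import structures.
From mathcomp Require Import all_boot all_order all_algebra.
From mathcomp Require Import reals.
Set Implicit Arguments. Unset Strict Implicit. Unset Printing Implicit Defensive.
Import Order.TTheory GRing.Theory Num.Theory.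
Local Open Scope ring_scope.

Section SDQ.
Variables (R : realType) (nS nA : nat).

(* Vectors in R^{|S||A|} stack Q(.,1),...,Q(.,|A|): entry (s,a) sits at
   index  a*|S| + s  =  mxvec_index a s, i.e. the row of e_a (x) e_s. *)
Definition vecT := 'cV[R]_(nA * nS).
Definition idx (s : 'I_nS) (a : 'I_nA) : 'I_(nA * nS) := mxvec_index a s.
Definition ent (Q : vecT) (s : 'I_nS) (a : 'I_nA) : R := Q (idx s a) 0.

Definition esa (s : 'I_nS) (a : 'I_nA) : vecT := delta_mx (idx s a) 0.
Definition es (s : 'I_nS) : 'cV[R]_nS := delta_mx s 0.

Definition is_greedy (pi : vecT -> 'I_nS -> 'I_nA) : Prop :=
  forall Q s a, ent Q s a <= ent Q s (pi Q s).

Definition PiM (pi : vecT -> 'I_nS -> 'I_nA) (Q : vecT) : 'M[R]_(nS, nA * nS) :=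
  \matrix_(s, j) (j == idx s (pi Q s))%:R.

Definition Dmx (d : vecT) : 'M[R]_(nA * nS) := diag_mx d^T.

Definition Rvec (P : 'M[R]_(nA * nS, nS)) (r : 'I_nS -> 'I_nA -> 'I_nS -> R) : vecT :=
  \col_(i < nA * nS) \sum_(s' < nS)
     P i s' * r (snd (pair_of_mxvec_index (mxvec_indexP i)))
                (fst (pair_of_mxvec_index (mxvec_indexP i))) s'.

Definition stochastic (P : 'M[R]_(nA * nS, nS)) : Prop :=
  (forall i s', 0 <= P i s') /\ (forall i, \sum_(s' < nS) P i s' = 1).

Definition pos_distribution (d : vecT) : Prop :=
  (forall i, 0 < d i 0) /\ \sum_(i < nA * nS) d i 0 = 1.

(* Q* : optimal action-value function, characterized by the Bellman
   optimality equation  Q* = R + gamma P Pi_{Q*} Q*  *)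
Definition bellman_opt pi P (Rv : vecT) (gamma : R) (Qs : vecT) : Prop :=
  Qs = Rv + gamma *: (P *m (PiM pi Qs *m Qs)).

Definition sdq_step pi (alpha gamma : R) (s : 'I_nS) (a : 'I_nA) (s' : 'I_nS)
  (rew : R) (QA QB : vecT) : vecT :=
  QA + (alpha * (rew + gamma * ent QA s' (pi QB s') - ent QA s a)) *: esa s a.

Definition noise pi (d : vecT) P Rv (gamma : R) (s : 'I_nS) (a : 'I_nA)
  (s' : 'I_nS) (rew : R) (QA QB : vecT) : vecT :=
  rew *: esa s a
  + gamma *: (esa s a *m (es s')^T *m PiM pi QB *m QA)
  - esa s a *m (esa s a)^T *m QA
  - (Dmx d *m Rv + gamma *: (Dmx d *m P *m PiM pi QB *m QA) - Dmx d *m QA).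

Definition lev (u v : vecT) : Prop := forall i, u i 0 <= v i 0.

End SDQ.

(* Main.v *)
Require Import Defs.
From HB Require Import structures.
From mathcomp Require Import all_boot all_order all_algebra.
From mathcomp Require Import reals.
Import Order.TTheory GRing.Theory Num.Theory.
Local Open Scope ring_scope.
From mathcomp Require Import ring lra.
Lemma Pi_mul (R : realType) nS nA pi (Q : vecT R nS nA) m (V : 'M_(nA*nS, m)) s j :
  (PiM pi Q *m V) s j = V (idx s (pi Q s)) j.
Proof.
rewrite mxE (bigD1 (idx s (pi Q s))) //= mxE eqxx mul1r big1 ?addr0 // => i /negbTE Hi.
by rewrite mxE Hi mul0r.
Qed.

Lemma mul_cv11 (R : realType) n (v : 'cV[R]_n) (y : 'M[R]_1) : v *m y = y 0 0 *: v.
Proof. by rewrite {1}[y]mx11_scalar mul_mx_scalar. Qed.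

Lemma eT_mul (R : realType) n (i : 'I_n) (V : 'cV[R]_n) : ((delta_mx i 0 : 'cV[R]_n)^T *m V) 0 0 = V i 0.
Proof. by rewrite trmx_delta -rowE mxE. Qed.

Lemma bracket (R : realType) nS nA pi (gamma : R) s a s' rew (QA QB : vecT R nS nA) :
  rew *: esa R s a + gamma *: (esa R s a *m (es R s')^T *m PiM pi QB *m QA)
  - esa R s a *m (esa R s a)^T *m QA
  = (rew + gamma * ent QA s' (pi QB s') - ent QA s a) *: esa R s a.
Proof.
rewrite -!mulmxA !mul_cv11.
rewrite /es eT_mul Pi_mul /esa eT_mul.
rewrite /ent /idx scalerA -scalerDl -scalerBl; congr (_ *: _).
Qed.

Lemma key (R : realType) nS nA (P : 'M[R]_(nA * nS, nS)) Rv gamma alpha (d : vecT R nS nA)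
  pi (Qs : vecT R nS nA) s a s' rew (QA QB QAU QAU' : vecT R nS nA) :
  bellman_opt pi P Rv gamma Qs ->
  QAU' - Qs =
     (1%:M + (alpha * gamma) *: (Dmx d *m P *m PiM pi QB) - alpha *: Dmx d)
       *m (QAU - Qs)
     + alpha *: noise pi d P Rv gamma s a s' rew QA QB ->
  (QAU' - Qs) - (sdq_step pi alpha gamma s a s' rew QA QB - Qs) =
     (1%:M + (alpha * gamma) *: (Dmx d *m P *m PiM pi QB) - alpha *: Dmx d)
       *m ((QAU - Qs) - (QA - Qs))
   + (alpha * gamma) *: (Dmx d *m (P *m (PiM pi Qs *m Qs - PiM pi QB *m Qs))).
Proof.
move=> Hb HU.
have HR := canRL (addrK _) (esym Hb).
rewrite HU /sdq_step -[(alpha * _) *: esa R s a]scalerA -bracket /noise HR.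
set b := rew *: esa R s a + _ - _.
set D := Dmx d. set PB := PiM pi QB. set PS := PiM pi Qs.
rewrite !(mulmxDl, mulmxBl, mulmxDr, mulmxBr, mul1mx, scalerDr, scalerBr, mulmxA, scalerA).
rewrite -?(scalemxAl, scalemxAr) ?scalerA ?mulmxA.
rewrite ?(mulmxN, mulNmx, scalerN, mulmxBr, mulmxDr, scalerDr, scalerBr, mulmxA, scalerA, opprD, opprK).
rewrite -?(scalemxAl, scalemxAr) ?scalerA ?mulmxA.
apply/matrixP => i j; rewrite !mxE.
ring.
Qed.

Definition nn {R : realType} {m n} (A : 'M[R]_(m, n)) := forall i j, 0 <= A i j.

Lemma nnD (R : realType) m n (A B : 'M[R]_(m, n)) : nn A -> nn B -> nn (A + B).
Proof. by move=> HA HB i j; rewrite mxE addr_ge0. Qed.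
Lemma nnZ (R : realType) m n c (A : 'M[R]_(m, n)) : 0 <= c -> nn A -> nn (c *: A).
Proof. by move=> Hc HA i j; rewrite mxE mulr_ge0. Qed.
Lemma nnM (R : realType) m n p (A : 'M[R]_(m, n)) (B : 'M[R]_(n, p)) : nn A -> nn B -> nn (A *m B).
Proof. by move=> HA HB i j; rewrite mxE sumr_ge0 // => k _; rewrite mulr_ge0. Qed.

Lemma d_le1 (R : realType) nS nA (d : vecT R nS nA) i : pos_distribution d -> d i 0 <= 1.
Proof.
move=> [Hp Hs]; rewrite -Hs (bigD1 i) //= lerDl sumr_ge0 // => j _.
exact: ltW.
Qed.

Lemma nnDmx (R : realType) nS nA (d : vecT R nS nA) m (A : 'M[R]_(nA*nS, m)) :
  pos_distribution d -> nn A -> nn (Dmx d *m A).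
Proof.
move=> [Hp _] HA i j; rewrite /Dmx mul_diag_mx !mxE mulr_ge0 //; exact: ltW.
Qed.

Lemma nnPi (R : realType) nS nA pi (Q : vecT R nS nA) : nn (PiM pi Q).
Proof. by move=> i j; rewrite mxE ler0n. Qed.

Lemma nnMmat (R : realType) nS nA (P : 'M[R]_(nA * nS, nS)) (alpha gamma : R) (d : vecT R nS nA) pi Q :
  stochastic P -> 0 <= gamma -> pos_distribution d -> 0 < alpha < 1 ->
  nn (1%:M + (alpha * gamma) *: (Dmx d *m P *m PiM pi Q) - alpha *: Dmx d).
Proof.
move=> [HP _] Hg Hd /andP[Ha0 Ha1] i j.
have Ha0' := ltW Ha0.
have H1 : 0 <= (Dmx d *m P *m PiM pi Q) i j.
  by rewrite -mulmxA; apply: nnDmx => //; apply: nnM => //; apply: nnPi.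
have H2 := @d_le1 _ _ _ d i Hd.
move: (Dmx d *m P *m PiM pi Q) H1 => M1 H1.
rewrite !mxE /Dmx.
case: (eqVneq i j) H1 => [<-|Hij] H1.
  rewrite !mulr1n.
  have : 0 <= alpha * gamma * M1 i i by rewrite mulr_ge0 // mulr_ge0.
  have : 0 < d i 0 by case: Hd => + _; apply.
  nra.
rewrite mulr0n mulr0 subr0 add0r; apply: mulr_ge0 => //; apply: mulr_ge0 => //; exact: ltW.
Qed.

Lemma nnB (R : realType) m n (A B : 'M[R]_(m, n)) : (forall i j, B i j <= A i j) -> nn (A - B).
Proof. by move=> H i j; rewrite !mxE subr_ge0. Qed.

Lemma step (R : realType) nS nA (P : 'M[R]_(nA * nS, nS)) Rv (gamma alpha : R) (d : vecT R nS nA)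
  pi (Qs : vecT R nS nA) s a s' rew (QA QB QAU QAU' : vecT R nS nA) :
  stochastic P -> 0 < gamma < 1 -> pos_distribution d -> 0 < alpha < 1 ->
  is_greedy pi -> bellman_opt pi P Rv gamma Qs ->
  QAU' - Qs =
     (1%:M + (alpha * gamma) *: (Dmx d *m P *m PiM pi QB) - alpha *: Dmx d)
       *m (QAU - Qs)
     + alpha *: noise pi d P Rv gamma s a s' rew QA QB ->
  lev (QA - Qs) (QAU - Qs) ->
  lev (sdq_step pi alpha gamma s a s' rew QA QB - Qs) (QAU' - Qs).
Proof.
move=> HP /andP[Hg0 Hg1] Hd Ha Hgr Hb HU Hl i.
have K := @key R nS nA P Rv gamma alpha d pi Qs s a s' rew QA QB QAU QAU' Hb HU.
have Hn : nn ((1%:M + (alpha * gamma) *: (Dmx d *m P *m PiM pi QB) - alpha *: Dmx d)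
       *m ((QAU - Qs) - (QA - Qs))
   + (alpha * gamma) *: (Dmx d *m (P *m (PiM pi Qs *m Qs - PiM pi QB *m Qs)))).
  apply: nnD.
    apply: nnM; first by apply: nnMmat => //; exact: ltW.
    apply: nnB => j k; rewrite (ord1 k); exact: Hl.
  case/andP: Ha => Ha0 _.
  apply: nnZ; first by apply: mulr_ge0; exact: ltW.
  apply: nnDmx => //; apply: nnM; first by case: HP.
  apply: nnB => j k; rewrite !Pi_mul (ord1 k); exact: Hgr.
by have := Hn i 0; rewrite -K !mxE subr_ge0.
Qed.
Theorem proposition1 (R : realType) (nS nA : nat)
  (P : 'M[R]_(nA * nS, nS)) (r : 'I_nS -> 'I_nA -> 'I_nS -> R)
  (gamma alpha : R) (d : vecT R nS nA)
  (pi : vecT R nS nA -> 'I_nS -> 'I_nA) (Qs : vecT R nS nA)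
  (s : nat -> 'I_nS) (a : nat -> 'I_nA) (s' : nat -> 'I_nS)
  (QA QB QAU QBU : nat -> vecT R nS nA) :
  stochastic P ->
  0 < gamma < 1 ->
  pos_distribution d ->
  0 < alpha < 1 ->
  is_greedy pi ->
  bellman_opt pi P (Rvec P r) gamma Qs ->
  (* the samples are a realization of the sampling model *)
  (forall k, 0 < P (idx (s k) (a k)) (s' k)) ->
  (* SDQ iterates (arbitrary initial values QA 0, QB 0) *)
  (forall k, QA k.+1 = sdq_step pi alpha gamma (s k) (a k) (s' k)
                         (r (s k) (a k) (s' k)) (QA k) (QB k)) ->
  (forall k, QB k.+1 = sdq_step pi alpha gamma (s k) (a k) (s' k)
                         (r (s k) (a k) (s' k)) (QB k) (QA k)) ->
  (* upper comparison system (arbitrary initial values QAU 0, QBU 0) *)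
  (forall k, QAU k.+1 - Qs =
     (1%:M + (alpha * gamma) *: (Dmx d *m P *m PiM pi (QB k)) - alpha *: Dmx d)
       *m (QAU k - Qs)
     + alpha *: noise pi d P (Rvec P r) gamma (s k) (a k) (s' k)
                  (r (s k) (a k) (s' k)) (QA k) (QB k)) ->
  (forall k, QBU k.+1 - Qs =
     (1%:M + (alpha * gamma) *: (Dmx d *m P *m PiM pi (QA k)) - alpha *: Dmx d)
       *m (QBU k - Qs)
     + alpha *: noise pi d P (Rvec P r) gamma (s k) (a k) (s' k)
                  (r (s k) (a k) (s' k)) (QB k) (QA k)) ->
  lev (QA 0%N - Qs) (QAU 0%N - Qs) ->
  lev (QB 0%N - Qs) (QBU 0%N - Qs) ->
  forall k, lev (QA k - Qs) (QAU k - Qs) /\ lev (QB k - Qs) (QBU k - Qs).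
Proof.
move=> HP Hg Hd Ha Hgr Hb _ HA HB HAU HBU H0A H0B k.
elim: k => [|k [IA IB]]; first by split.
split.
  rewrite HA; exact: (step _ _ _ _ _ _ _ _ _ _ _ _ _ _ _ _ _ _ HP Hg Hd Ha Hgr Hb (HAU k) IA).
rewrite HB; exact: (step _ _ _ _ _ _ _ _ _ _ _ _ _ _ _ _ _ _ HP Hg Hd Ha Hgr Hb (HBU k) IB).
Qed.
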